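(* For every $t\in[T]$ and every $x\in\mathbb R^d$ with $\|x\|_2\le1$, the estimates produced by Algorithm 1 satisfy $$\max_{A\in\mathcal A}\mathbb E\Big[\sum_{k=1}^K\langle x,\hat\theta_{t,k}-\tilde\theta_{t,k}\rangle(A)_k\,\Big|\,\mathcal F_{t-1}\Big]\le \frac{m}{t^2}.$$
   Context: Fix integers $K\ge2$, $1\le m<K$, $d\ge1$ and a horizon $T\ge3$. Let $\mathcal A=\{A\in\{0,1\}^K:\sum_{k=1}^K(A)_k\le m\}$, where $(A)_k$ denotes the $k$-th coordinate, and let $\mathrm{conv}(\mathcal A)$ be its convex hull. Contexts are drawn i.i.d. from a distribution $\mathcal D$ on $\mathbb R^d$ with $\|X\|_2\le1$ almost surely and $\Sigma=\mathbb E[XX^\top]\succ0$; $\lambda_{\min}(\Sigma)$ is its smallest eigenvalue. Protocol: in each round $t=1,\dots,T$ the environment fixes vectors $\theta_{t,1},\dots,\theta_{t,K}\in\mathbb R^d$ with $\|\theta_{t,k}\|_2\le1$ (not depending on the learner's actions), a context $X_t\sim\mathcal D$ is drawn independently of the past, the learner observes $X_t$, plays $A_t\in\mathcal A$, suffers $\sum_k\ell_t(X_t,k)(A_t)_k$ and observes $\ell_t(X_t,k)$ for every $k$ with $(A_t)_k=1$; all losses satisfy $\ell_t(x,k)\in[-1,1]$. Let $\mathcal F_t=\sigma(X_1,A_1,\dots,X_t,A_t)$ and $H(a)=-\sum_{k=1}^K a_k\ln a_k$ (with $0\ln 0=0$) for $a\in\mathrm{conv}(\mathcal A)$. Parameters: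 $c_1=\sqrt{(d+\ln T/\lambda_{\min}(\Sigma))K\ln T/(m\ln(K/m))}$, assumed $\ge1$; $c_2=8K/\lambda_{\min}(\Sigma)$; $\beta'_1=c_1$ and $\beta'_{t+1}=\beta'_t+c_1\big(1+(m\ln(K/m))^{-1}\sum_{s=1}^tH(\bar A_s(X_s))\big)^{-1/2}$; $\beta_t=\max\{2,c_2\ln T,\beta'_t\}$; $\eta_t=1/\beta_t$; $\alpha_t=4K\ln(t)/\lambda_{\min}(\Sigma)$; $\gamma_t=\alpha_t\eta_t$; $M_t=\lceil 4K\ln(t)/(\gamma_t\lambda_{\min}(\Sigma))\rceil=\lceil 1/\eta_t\rceil$ (the latter expression also used at $t=1$); $E=\{e_1,\dots,e_K\}\subseteq\mathcal A$ the standard basis vectors. Algorithm 1: set $\tilde\theta_{0,k}=0$. In round $t$: for a context $x$ let $\bar A_t(x)\in\arg\min_{a\in\mathrm{conv}(\mathcal A)}\{\sum_{s=1}^{t-1}\sum_{k}\langle x,\tilde\theta_{s,k}\rangle a_k-H(a)/\eta_t\}$; let $p_t(\cdot|x)$ be any distribution on $\mathcal A$ with $\sum_a p_t(a|x)\,a=\bar A_t(x)$; let $\pi_t(a|x)=(1-\gamma_t)p_t(a|x)+\gamma_t\mathbf 1[a\in E]/K$; sample $A_t\sim\pi_t(\cdot|X_t)$. Then draw $M_t$ fresh independent pairs $X(n)\sim\mathcal D$, $A(n)\sim\pi_t(\cdot|X(n))$, set $C_{n,k}=\prod_{j=1}^n\big(I-(A(j))_kX(j)X(j)^\top/2\big)$,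 $\widehat\Sigma^+_{t,k}=\big(I+\sum_{n=1}^{M_t}C_{n,k}\big)/2$, and $\tilde\theta_{t,k}=\widehat\Sigma^+_{t,k}X_t\,\ell_t(X_t,k)(A_t)_k$ for all $k\in[K]$. Unbiased reference estimator: $\Sigma_{t,k}=\mathbb E[(A_t)_kX_tX_t^\top\mid\mathcal F_{t-1}]$ and $\hat\theta_{t,k}=\Sigma_{t,k}^{-1}X_t\,\ell_t(X_t,k)(A_t)_k$. *)

(* Defs.v *)
From HB Require Import structures.
From mathcomp Require Import all_boot all_order all_algebra.
From mathcomp Require Import all_classical all_reals all_analysis.
Set Implicit Arguments. Unset Strict Implicit. Unset Printing Implicit Defensive.
Import Order.TTheory GRing.Theory Num.Theory.
Local Open Scope ring_scope.
Local Open Scope classical_set_scope.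

Section Bandit.
Variable R : realType.

(* A context x in R^d is an element of the measurable space d.-tuple R
   (product Borel sigma-algebra); its column vector: *)
Definition colv (d : nat) (x : d.-tuple R) : 'cV[R]_d := \col_i tnth x i.

Definition dotv (d : nat) (u v : 'cV[R]_d) : R := \sum_i u i 0 * v i 0.
Definition norm2 (d : nat) (u : 'cV[R]_d) : R := Num.sqrt (dotv u u).

Definition posdef (d : nat) (S : 'M[R]_d) : Prop :=
  S^T = S /\ forall v : 'cV[R]_d, v != 0 -> 0 < (v^T *m S *m v) 0 0.

Definition is_lambda_min (d : nat) (S : 'M[R]_d) (lam : R) : Prop :=
  eigenvalue S lam /\ forall a : R, eigenvalue S a -> lam <= a.

(* An action A in {0,1}^K is represented by its support {k | (A)_k = 1};
   (A)_k = (k \in A)%:R.  The action set is {A : #|A| <= m}. *)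
Definition inAct (K m : nat) (a : {set 'I_K}) : bool := (#|a| <= m)%N.

Definition in_convA (K m : nat) (a : 'I_K -> R) : Prop :=
  exists w : {set 'I_K} -> R,
    [/\ forall S, 0 <= w S, forall S, ~~ inAct m S -> w S = 0,
        \sum_S w S = 1 & forall k, a k = \sum_S w S * (k \in S)%:R].

Definition xlnx (y : R) : R := if y == 0 then 0 else y * ln y.
Definition entropy (K : nat) (a : 'I_K -> R) : R := - \sum_k xlnx (a k).

Definition c1 (K m d T : nat) (lam : R) : R :=
  Num.sqrt ((d%:R + ln T%:R / lam) * K%:R * ln T%:R
            / (m%:R * ln (K%:R / m%:R))).
Definition c2 (K : nat) (lam : R) : R := 8 * K%:R / lam.

(* betap_aux c cst Hs n = beta'_{n+1}, where Hs s = H(Abar_s(X_s)) and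
   cst = m ln(K/m):
   beta'_1 = c,  beta'_{s+1} = beta'_s + c (1 + cst^-1 sum_{r=1}^s Hs r)^{-1/2} *)
Fixpoint betap_aux (c cst : R) (Hs : nat -> R) (n : nat) : R :=
  match n with
  | 0 => c
  | n'.+1 => betap_aux c cst Hs n'
             + c / Num.sqrt (1 + cst^-1 * \sum_(1 <= r < n'.+2) Hs r)
  end.

Definition betap (K m d T : nat) (lam : R) (Hs : nat -> R) (t : nat) : R :=
  betap_aux (c1 K m d T lam) (m%:R * ln (K%:R / m%:R)) Hs t.-1.

Definition betaT (K m d T : nat) (lam : R) (Hs : nat -> R) (t : nat) : R :=
  Num.max 2 (Num.max (c2 K lam * ln T%:R) (betap K m d T lam Hs t)).

Definition etaT (K m d T : nat) (lam : R) (Hs : nat -> R) (t : nat) : R :=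
  (betaT K m d T lam Hs t)^-1.

Definition alphaT (K : nat) (lam : R) (t : nat) : R := 4 * K%:R * ln t%:R / lam.

Definition gammaT (K m d T : nat) (lam : R) (Hs : nat -> R) (t : nat) : R :=
  alphaT K lam t * etaT K m d T lam Hs t.

Definition Msamp (K m d T : nat) (lam : R) (Hs : nat -> R) (t : nat) : nat :=
  `|Num.ceil ((etaT K m d T lam Hs t)^-1)|%N.

(* pi(a|x) = (1-gam) p(a|x) + gam 1[a in E]/K ; E = singletons *)
Definition mixpol (K : nat) (gam : R) (d : nat)
    (p : d.-tuple R -> {set 'I_K} -> R) (x : d.-tuple R) (a : {set 'I_K}) : R :=
  (1 - gam) * p x a + gam * ((#|a| == 1%N)%:R / K%:R).

Definition Epol (K m d : nat) (D : probability (d.-tuple R) R)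
    (pol : d.-tuple R -> {set 'I_K} -> R)
    (f : d.-tuple R -> {set 'I_K} -> R) : R :=
  Rintegral D setT (fun x => \sum_(a | inAct m a) pol x a * f x a).

(* expectation over n independent fresh pairs (X(1),A(1)),...,(X(n),A(n)),
   X(j) ~ D i.i.d., A(j) ~ pol(.|X(j)); the list passed to g is
   [:: (X(1),A(1)); ...; (X(n),A(n))]. *)
Fixpoint Eiter (K m d : nat) (D : probability (d.-tuple R) R)
    (pol : d.-tuple R -> {set 'I_K} -> R) (n : nat)
    (g : seq (d.-tuple R * {set 'I_K}) -> R) : R :=
  match n with
  | 0 => g [::]
  | n'.+1 => Epol m D pol (fun x a =>
               Eiter m D pol n' (fun l => g ((x, a) :: l)))
  end.

Definition linloss (K d : nat) (theta : 'I_K -> 'cV[R]_d)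
    (x : d.-tuple R) (k : 'I_K) : R := dotv (colv x) (theta k).

Definition Cprod (K d : nat) (l : seq (d.-tuple R * {set 'I_K})) (k : 'I_K)
  : 'M[R]_d :=
  foldr (fun (p : d.-tuple R * {set 'I_K}) (acc : 'M[R]_d) =>
           (1%:M - ((k \in p.2)%:R / 2) *: (colv p.1 *m (colv p.1)^T)) *m acc)
        1%:M l.

Definition SigPlus (K d M : nat) (l : seq (d.-tuple R * {set 'I_K})) (k : 'I_K)
  : 'M[R]_d :=
  2^-1 *: (1%:M + \sum_(1 <= n < M.+1) Cprod (take n l) k).

Definition thetaTilde (K d M : nat) (loss : d.-tuple R -> 'I_K -> R)
    (l : seq (d.-tuple R * {set 'I_K})) (k : 'I_K)
    (x0 : d.-tuple R) (a0 : {set 'I_K}) : 'cV[R]_d :=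
  (loss x0 k * (k \in a0)%:R) *: (SigPlus M l k *m colv x0).

Definition SigmaTK (K m d : nat) (D : probability (d.-tuple R) R)
    (pol : d.-tuple R -> {set 'I_K} -> R) (k : 'I_K) : 'M[R]_d :=
  \matrix_(i, j) Epol m D pol (fun x a => (k \in a)%:R * (tnth x i * tnth x j)).

Definition thetaHat (K m d : nat) (D : probability (d.-tuple R) R)
    (pol : d.-tuple R -> {set 'I_K} -> R) (loss : d.-tuple R -> 'I_K -> R)
    (k : 'I_K) (x0 : d.-tuple R) (a0 : {set 'I_K}) : 'cV[R]_d :=
  (loss x0 k * (k \in a0)%:R) *: (invmx (SigmaTK m D pol k) *m colv x0).

Definition SigmaD (d : nat) (D : probability (d.-tuple R) R) : 'M[R]_d :=
  \matrix_(i, j) Rintegral D setT (fun x => tnth x i * tnth x j).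

Definition ftrl_obj (K d : nat) (tht : nat -> 'I_K -> 'cV[R]_d) (t : nat)
    (et : R) (x : 'cV[R]_d) (a : 'I_K -> R) : R :=
  \sum_(1 <= s < t) \sum_k dotv x (tht s k) * a k - entropy a / et.

End Bandit.

(* Main.v *)
Require Import Defs.
From HB Require Import structures.
From mathcomp Require Import all_boot all_order all_algebra.
From mathcomp Require Import all_classical all_reals all_analysis.
From mathcomp Require Import measurable_realfun.
From mathcomp Require Import ring lra.
Set Implicit Arguments. Unset Strict Implicit. Unset Printing Implicit Defensive.
Import Order.TTheory GRing.Theory Num.Theory.
Local Open Scope ring_scope.
Local Open Scope classical_set_scope.

Section LinAlg.
Variable R : realType.
Variable d : nat.
Implicit Types u v w : 'cV[R]_d.
Implicit Types A B : 'M[R]_d.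

Lemma dotvC u v : dotv u v = dotv v u.
Proof. by rewrite /dotv; apply: eq_bigr => i _; rewrite mulrC. Qed.

Lemma dotvDr u v w : dotv u (v + w) = dotv u v + dotv u w.
Proof. by rewrite /dotv -big_split; apply: eq_bigr => i _; rewrite mxE mulrDr. Qed.

Lemma dotvZr u v (c : R) : dotv u (c *: v) = c * dotv u v.
Proof. by rewrite /dotv mulr_sumr; apply: eq_bigr => i _; rewrite mxE mulrCA. Qed.

Lemma dotvNr u v : dotv u (- v) = - dotv u v.
Proof. by rewrite -scaleN1r dotvZr mulN1r. Qed.

Lemma dotvBr u v w : dotv u (v - w) = dotv u v - dotv u w.
Proof. by rewrite dotvDr dotvNr. Qed.

Lemma dotv0r u : dotv u 0 = 0.
Proof. by rewrite /dotv big1 // => i _; rewrite mxE mulr0. Qed.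

Lemma dotvDl u v w : dotv (v + w) u = dotv v u + dotv w u.
Proof. by rewrite dotvC dotvDr !(dotvC u). Qed.

Lemma dotvZl u v (c : R) : dotv (c *: v) u = c * dotv v u.
Proof. by rewrite dotvC dotvZr dotvC. Qed.

Lemma dotvBl u v w : dotv (v - w) u = dotv v u - dotv w u.
Proof. by rewrite dotvC dotvBr !(dotvC u). Qed.

Lemma dotv_sumr (I : Type) (r : seq I) (P : pred I) (F : I -> 'cV[R]_d) u :
  dotv u (\sum_(i <- r | P i) F i) = \sum_(i <- r | P i) dotv u (F i).
Proof.
elim/big_rec2: _ => [|i y1 y2 _ <-]; first exact: dotv0r.
by rewrite dotvDr.
Qed.

Lemma dotvE u v : dotv u v = (u^T *m v) 0 0.
Proof. by rewrite /dotv mxE; apply: eq_bigr => i _; rewrite mxE. Qed.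

Lemma dotv_mulmx u A v : dotv u (A *m v) = dotv (A^T *m u) v.
Proof. by rewrite !dotvE trmx_mul trmxK mulmxA. Qed.

Lemma dotv_sym u A v : A^T = A -> dotv u (A *m v) = dotv (A *m u) v.
Proof. by move=> hA; rewrite dotv_mulmx hA. Qed.

Lemma dotv_ge0 v : 0 <= dotv v v.
Proof. by rewrite /dotv sumr_ge0 // => i _; rewrite -expr2 sqr_ge0. Qed.

Lemma dotv1 u v : dotv u (1%:M *m v) = dotv u v.
Proof. by rewrite mul1mx. Qed.

End LinAlg.


Section Quad.
Variable R : realType.
Variable d : nat.
Implicit Types u v w : 'cV[R]_d.
Implicit Types A B : 'M[R]_d.

Definition qf A v := dotv v (A *m v).

Lemma qf_expand A u w (s : R) : A^T = A ->
  qf A (u + s *: w) = qf A u + 2 * s * dotv u (A *m w) + s ^+ 2 * qf A w.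
Proof.
move=> hA; rewrite /qf mulmxDr -scalemxAr dotvDl !dotvDr !dotvZl !dotvZr.
rewrite [dotv w (A *m u)]dotv_sym // [dotv (A *m w) u]dotvC.
by rewrite mulrA -expr2; ring.
Qed.

Lemma psd_cs A u w : A^T = A -> (forall v, 0 <= qf A v) ->
  dotv u (A *m w) ^+ 2 <= qf A u * qf A w.
Proof.
move=> hA hpos; set b := dotv u (A *m w).
have H s : 0 <= qf A u + 2 * s * b + s ^+ 2 * qf A w.
  by rewrite -qf_expand.
have [qw0|qwpos] := eqVneq (qf A w) 0.
  have [->|bn0] := eqVneq b 0; first by rewrite expr0n /= qw0 mulr0.
  have := H (- (qf A u + 1) / (2 * b)); rewrite qw0 mulr0 addr0.
  have -> : 2 * (- (qf A u + 1) / (2 * b)) * b = - (qf A u + 1).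
    by field.
  by rewrite opprD addrA subrr add0r ler0N1.
have qwp : 0 < qf A w by rewrite lt_def qwpos hpos.
have := H (- b / qf A w).
have -> : qf A u + 2 * (- b / qf A w) * b + (- b / qf A w) ^+ 2 * qf A w
   = qf A u - b ^+ 2 / qf A w by field.
rewrite subr_ge0 ler_pdivrMr //.
Qed.

Lemma qcontract A w (rho : R) : A^T = A -> 0 <= rho ->
  (forall v, 0 <= qf A v) -> (forall v, qf A v <= rho * dotv v v) ->
  dotv (A *m w) (A *m w) <= rho ^+ 2 * dotv w w.
Proof.
move=> hA hr hpos hle; set y := A *m w.
have := psd_cs y w hA hpos.
rewrite -/y => h.
have h2 : dotv y y ^+ 2 <= (rho * dotv y y) * (rho * dotv w w).
  apply: (le_trans h); apply: ler_pM => //; exact: hle.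
have [N0|Np] := eqVneq (dotv y y) 0.
  by rewrite N0 mulr_ge0 ?sqr_ge0 ?dotv_ge0.
have Npos : 0 < dotv y y by rewrite lt_def Np dotv_ge0.
rewrite expr2 in h2.
have : dotv y y * dotv y y <= dotv y y * (rho ^+ 2 * dotv w w).
  by apply: (le_trans h2); rewrite le_eqVlt; apply/orP; left; apply/eqP; ring.
by rewrite ler_pM2l.
Qed.

Definition mpow A n := iter n (mulmx A) 1%:M.

Lemma mpowS A n : mpow A n.+1 = A *m mpow A n.
Proof. by []. Qed.

Lemma mpowSr A n : mpow A n.+1 = mpow A n *m A.
Proof.
elim: n => [|n IH]; first by rewrite /mpow /= mulmx1 mul1mx.
by rewrite [LHS]mpowS {1}IH mulmxA.
Qed.

Lemma mpow_sym A n : A^T = A -> (mpow A n)^T = mpow A n.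
Proof.
move=> hA; elim: n => [|n IH]; first by rewrite /mpow /= trmx1.
by rewrite {1}mpowS trmx_mul IH hA -mpowSr.
Qed.

Lemma qf_pow A (rho : R) : A^T = A -> 0 <= rho ->
  (forall v, 0 <= qf A v) -> (forall v, qf A v <= rho * dotv v v) ->
  forall n v, 0 <= qf (mpow A n) v <= rho ^+ n * dotv v v.
Proof.
move=> hA hr hpos hle.
suff H : forall n, (forall v, 0 <= qf (mpow A n) v <= rho ^+ n * dotv v v) /\
   (forall v, 0 <= qf (mpow A n.+1) v <= rho ^+ n.+1 * dotv v v).
  by move=> n v; case: (H n) => h _; exact: h.
elim=> [|n [IH1 IH2]].
  split=> v; first by rewrite /qf /mpow /= mul1mx expr0 mul1r lexx dotv_ge0.
  by rewrite /qf /mpow /= mulmx1 expr1 hpos hle.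
split => // v.
have -> : qf (mpow A n.+2) v = qf (mpow A n) (A *m v).
  by rewrite /qf mpowS mpowSr -!mulmxA dotv_sym.
have /andP[h1 h2] := IH1 (A *m v).
rewrite h1 /=; apply: (le_trans h2).
have -> : rho ^+ n.+2 = rho ^+ n * rho ^+ 2 by rewrite -exprD addn2.
rewrite -mulrA ler_wpM2l ?exprn_ge0 //; exact: qcontract.
Qed.



Lemma dotv_qf1 v : dotv v v = qf 1%:M v.
Proof. by rewrite /qf mul1mx. Qed.

Lemma polar Z (c : R) x y : Z^T = Z -> 0 <= c ->
  (forall v, `|qf Z v| <= c * dotv v v) -> dotv x x <= 1 -> dotv y y <= 1 ->
  `|dotv x (Z *m y)| <= c.
Proof.
move=> hZ hc hq hx hy.
have e1 := qf_expand x y 1 hZ.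
have e2 := qf_expand x y (-1) hZ.
have f1 := qf_expand x y 1 (trmx1 _ _).
have f2 := qf_expand x y (-1) (trmx1 _ _).
rewrite !mul1mx -!dotv_qf1 in f1 f2.
set a := qf Z x; set b := dotv x (Z *m y); set cc := qf Z y.
set p := dotv x x; set q := dotv x y; set r := dotv y y.
have p0 : 0 <= p by exact: dotv_ge0.
have r0 : 0 <= r by exact: dotv_ge0.
have h1 : `|a + 2 * b + cc| <= c * (p + 2 * q + r).
  by move: (hq (x + 1 *: y)); rewrite e1 f1 !expr1n !mulr1 !mul1r.
have h2 : `|a + - 2 * b + cc| <= c * (p + - 2 * q + r).
  by move: (hq (x + (-1) *: y)); rewrite e2 f2 !sqrrN !expr1n !mulrN1 !mul1r.
have hb : 4 * b = (a + 2 * b + cc) - (a + - 2 * b + cc) by ring.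
have : `|4 * b| <= c * (p + 2 * q + r) + c * (p + - 2 * q + r).
  rewrite hb; apply: (le_trans (ler_normB _ _)); exact: lerD.
rewrite normrM ger0_norm //.
have -> : c * (p + 2 * q + r) + c * (p + - 2 * q + r) = 2 * c * (p + r) by ring.
move=> h.
have h3 : 2 * c * (p + r) <= 2 * c * (1 + 1).
  by apply: ler_wpM2l; [exact: mulr_ge0 | exact: lerD].
have h4 := le_trans h h3.
have : 4 * `|b| <= 4 * c by apply: (le_trans h4); rewrite le_eqVlt; apply/orP; left; apply/eqP; ring.
by rewrite ler_pM2l.
Qed.

End Quad.


Section Ray.
Variable R : realType.
Variable d : nat.
Implicit Types u v w : 'cV[R]_d.
Implicit Types A B : 'M[R]_d.

Lemma qf_posdef A v : (v^T *m A *m v) 0 0 = qf A v.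
Proof. by rewrite /qf dotvE mulmxA. Qed.

Lemma coord_le v i : v i 0 ^+ 2 <= dotv v v.
Proof.
rewrite /dotv (bigD1 i) //= -expr2 lerDl sumr_ge0 // => j _.
by rewrite -expr2 sqr_ge0.
Qed.

Lemma qf_bound A v : `|qf A v| <= (\sum_i \sum_j `|A i j|) * dotv v v.
Proof.
rewrite /qf /dotv.
apply: (le_trans (ler_norm_sum _ _ _)).
rewrite -/(dotv v v) mulr_suml; apply: ler_sum => i _.
rewrite mxE mulr_sumr mulr_suml.
apply: (le_trans (ler_norm_sum _ _ _)); apply: ler_sum => j _.
rewrite mulrCA normrM [`|_ * _|]normrM mulrC -mulrA.
rewrite mulrA [X in X <= _]mulrC; apply: ler_wpM2l => //.
have hi := coord_le v i; have hj := coord_le v j.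
have : 2 * (`|v i 0| * `|v j 0|) <= v i 0 ^+ 2 + v j 0 ^+ 2.
  rewrite -[v i 0 ^+ 2]real_normK ?num_real // -[v j 0 ^+ 2]real_normK ?num_real //.
  have := sqr_ge0 (`|v i 0| - `|v j 0|); rewrite sqrrB; lra.
lra.
Qed.

Lemma posdef_qf0 A v : posdef A -> 0 <= qf A v.
Proof.
move=> [_ hA]; have [->|vn0] := eqVneq v 0.
  by rewrite /qf mulmx0 dotv0r.
by rewrite -qf_posdef ltW // hA.
Qed.

Lemma eig_pos A a : posdef A -> eigenvalue A a -> 0 < a.
Proof.
move=> hP /eigenvalueP [w hw wn0].
have [hS hA] := hP.
set u := w^T.
have un0 : u != 0 by rewrite -(inj_eq (@trmx_inj _ _ _)) trmxK trmx0.
have hu : A *m u = a *: u by rewrite -{1}hS -trmx_mul hw linearZ.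
have := hA u un0; rewrite qf_posdef /qf hu dotvZr.
have := dotv_ge0 u; set N := dotv u u => N0 aN.
rewrite ltNge; apply/negP => a0.
have : a * N <= 0 by rewrite mulr_le0_ge0.
by rewrite leNgt aN.
Qed.

Lemma unit_vec : (0 < d)%N -> exists v, dotv v v = 1.
Proof.
move=> hd; pose i0 := Ordinal hd.
exists (\col_i (i == i0)%:R); rewrite /dotv (bigD1 i0) //= big1 ?addr0.
  by rewrite !mxE eqxx mulr1.
by move=> j hj; rewrite !mxE (negbTE hj) mulr0.
Qed.

Lemma rayleigh A lam v : (0 < d)%N -> posdef A -> is_lambda_min A lam ->
  lam * dotv v v <= qf A v.
Proof.
move=> hd hP [hl hmin].
have hS := hP.1.
pose SET := [set r | exists v, dotv v v = 1 /\ r = qf A v].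
pose mu := inf SET.
have ne : nonempty SET.
  by have [u hu] := unit_vec hd; exists (qf A u); exists u.
have lb0 : has_lbound SET.
  by exists 0 => r [u [_ ->]]; exact: posdef_qf0.
have hmu : forall u, dotv u u = 1 -> mu <= qf A u.
  by move=> u hu; apply: ge_inf => //; exists u.
have hmu2 : forall u, mu * dotv u u <= qf A u.
  move=> u; have [N0|Nn0] := eqVneq (dotv u u) 0.
    by rewrite N0 mulr0 posdef_qf0.
  have Np : 0 < dotv u u by rewrite lt_def Nn0 dotv_ge0.
  set s := Num.sqrt (dotv u u).
  have sp : 0 < s by rewrite sqrtr_gt0.
  have s2 : s ^+ 2 = dotv u u by rewrite sqr_sqrtr // ltW.
  have := hmu (s^-1 *: u).
  rewrite /qf -scalemxAr dotvZl !dotvZr -/(qf A u) => h.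
  have h1 : s^-1 * (s^-1 * dotv u u) = 1.
    by rewrite -s2; field; rewrite gt_eqF.
  have := h h1; rewrite dotvZl mulrA -expr2 exprVn s2 => h2.
  by rewrite -ler_pdivlMr // mulrC.
pose P := A - mu%:M.
have hPq : forall u, qf P u = qf A u - mu * dotv u u.
  by move=> u; rewrite /qf mulmxBl dotvBr mul_scalar_mx dotvZr.
have hPS : P^T = P by rewrite /P linearB /= hS tr_scalar_mx.
have hP0 : forall u, 0 <= qf P u by move=> u; rewrite hPq subr_ge0.
have eigmu : eigenvalue A mu.
  rewrite /eigenvalue /eigenspace kermx_eq0 row_free_unit -/P.
  apply/negP => Pu.
  set Q := invmx P.
  set C := \sum_i \sum_j `|Q i j|.
  have key : forall u, dotv u u ^+ 2 <= qf P u * (C * dotv u u).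
    move=> u.
    have e : dotv u u = dotv u (P *m (Q *m u)) by rewrite mulKVmx.
    have := psd_cs u (Q *m u) hPS hP0; rewrite -e => h.
    apply: (le_trans h); apply: ler_wpM2l => //.
    have -> : qf P (Q *m u) = qf Q u.
      by rewrite /qf mulKVmx // dotvC.
    exact: (le_trans (ler_norm _) (qf_bound _ _)).
  have C0 : 0 < C.
    have [u hu] := unit_vec hd; have := key u.
    rewrite hu expr1n mulr1 => h.
    rewrite lt_def sumr_ge0 ?andbT; last by move=> i _; rewrite sumr_ge0.
    by apply/eqP => C0; move: h; rewrite C0 mulr0 ler10.
  have lbC : lbound SET (mu + C^-1).
    move=> r [u [hu ->]]; have := key u; rewrite hu expr1n mulr1 hPq hu mulr1.
    rewrite -ler_pdivrMr // mul1r; lra.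
  have := lb_le_inf ne lbC; rewrite -/mu.
  have : 0 < C^-1 by rewrite invr_gt0.
  lra.
have := hmin _ eigmu => hlm.
apply: le_trans (hmu2 v); apply: ler_wpM2r => //; exact: dotv_ge0.
Qed.

End Ray.


Section Integ.
Variable R : realType.
Variable d : nat.
Variable D : probability (d.-tuple R) R.
Hypothesis HDnorm : {ae D, forall x : d.-tuple R, norm2 (colv x) <= 1}.

Notation Rint f := (Rintegral D setT f).
Implicit Types f g : d.-tuple R -> R.
Definition Dint (f : d.-tuple R -> R) := D.-integrable setT (EFin \o f).

Lemma meas_tnth i : measurable_fun setT (fun x : d.-tuple R => tnth x i).
Proof. exact: measurable_tnth. Qed.

Lemma measM (f g : d.-tuple R -> R) : measurable_fun setT f -> measurable_fun setT g ->
  measurable_fun setT (fun x => f x * g x).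
Proof. exact: measurable_funM. Qed.

Lemma measD (f g : d.-tuple R -> R) : measurable_fun setT f -> measurable_fun setT g ->
  measurable_fun setT (fun x => f x + g x).
Proof. exact: measurable_funD. Qed.

Lemma measC (c : R) : measurable_fun setT (fun _ : d.-tuple R => c).
Proof. exact: measurable_cst. Qed.

Lemma measS (I : Type) (r : seq I) (P : pred I) (f : I -> d.-tuple R -> R) :
  (forall i, measurable_fun setT (f i)) ->
  measurable_fun setT (fun x => \sum_(i <- r | P i) f i x).
Proof.
move=> hf.
have -> : (fun x => \sum_(i <- r | P i) f i x) =
   (fun x => \sum_(i <- r) (if P i then f i x else 0)).
  by apply/funext => x; rewrite big_mkcond.
apply: measurable_sum => i; case: (P i) => //; exact: measC.
Qed.

Lemma int_aebd (f : d.-tuple R -> R) (M : R) : measurable_fun setT f ->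
  {ae D, forall x, `|f x| <= M} -> Dint f.
Proof.
move=> mf hb; apply/integrableP; split; first exact/measurable_EFinP.
have M0 : {ae D, forall x, setT x -> (`|(EFin \o f) x| <= (Num.max M 0)%:E)%E}.
  by apply: filterS hb => x hx _ /=; rewrite lee_fin le_max hx.
apply: (le_lt_trans (integral_le_bound _ measurableT _ _ M0)).
- exact/measurable_EFinP.
- by rewrite lee_fin le_max lexx orbT.
- rewrite [X in (_ * X)%E](_ : _ = 1%E); first by rewrite mule1 ltry.
  exact: probability_setT.
Qed.

Lemma Rint_cst (c : R) : Rint (fun _ => c) = c.
Proof.
rewrite Rintegral_cst // [X in fine X](_ : _ = 1%E) ?mulr1 //.
exact: probability_setT.
Qed.

Lemma int_cst (c : R) : Dint (fun _ => c).
Proof. exact: finite_measure_integrable_cst. Qed.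

Lemma intD f g : Dint f -> Dint g -> Dint (fun x => f x + g x).
Proof.
move=> hf hg; have := integrableD measurableT hf hg.
by apply: eq_integrable => // x _ /=.
Qed.

Lemma intZ (c : R) f : Dint f -> Dint (fun x => c * f x).
Proof.
move=> hf; have := integrableZl measurableT c hf.
by apply: eq_integrable => // x _ /=.
Qed.

Lemma int_sum (I : Type) (r : seq I) (f : I -> d.-tuple R -> R) :
  (forall i, Dint (f i)) -> Dint (fun x => \sum_(i <- r) f i x).
Proof.
move=> hf; elim: r => [|i r IH].
  by under [fun x => _]funext do rewrite big_nil; exact: int_cst.
by under [fun x => _]funext do rewrite big_cons; exact: intD.
Qed.

Lemma RintD f g : Dint f -> Dint g -> Rint (fun x => f x + g x) = Rint f + Rint g.
Proof. by move=> hf hg; rewrite RintegralD. Qed.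

Lemma RintZ (c : R) f : Dint f -> Rint (fun x => c * f x) = c * Rint f.
Proof. by move=> hf; rewrite RintegralZl. Qed.

Lemma Rint_sum (I : Type) (r : seq I) (f : I -> d.-tuple R -> R) :
  (forall i, Dint (f i)) -> Rint (fun x => \sum_(i <- r) f i x) = \sum_(i <- r) Rint (f i).
Proof.
move=> hf; elim: r => [|i r IH].
  by under [fun x => _]funext do rewrite big_nil; rewrite big_nil Rint_cst.
under [fun x => _]funext do rewrite big_cons.
by rewrite RintD ?big_cons ?IH //; exact: int_sum.
Qed.

Lemma Rint_ae_ge0 f : measurable_fun setT f -> {ae D, forall x, 0 <= f x} ->
  0 <= Rint f.
Proof.
move=> mf hf.
have -> : Rint f = Rint (fun x => Num.max (f x) 0).
  congr fine; apply: ae_eq_integral => //.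
  - exact/measurable_EFinP.
  - by apply/measurable_EFinP; exact: (measurable_maxr mf (measC 0)).
  apply: filterS hf => x hx _ /=; congr EFin.
  by rewrite max_l.
by apply: Rintegral_ge0 => x _; rewrite le_max lexx orbT.
Qed.

Lemma Rint_ae_le f g : measurable_fun setT f -> measurable_fun setT g ->
  Dint f -> Dint g -> {ae D, forall x, f x <= g x} -> Rint f <= Rint g.
Proof.
move=> mf mg hf hg hfg; rewrite -subr_ge0 -RintegralB //.
apply: Rint_ae_ge0.
  by apply: measD => //; apply: measurable_funN.
by apply: filterS hfg => x; rewrite subr_ge0.
Qed.

End Integ.


Section Core.
Variable R : realType.
Variable d : nat.
Variable D : probability (d.-tuple R) R.
Hypothesis HDnorm : {ae D, forall x : d.-tuple R, norm2 (colv x) <= 1}.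
Variables K m : nat.
Variable pol : d.-tuple R -> {set 'I_K} -> R.
Hypothesis Hpm : forall a, measurable_fun setT (fun x => pol x a).
Hypothesis Hp0 : forall x a, 0 <= pol x a.
Hypothesis Hp1 : forall x, \sum_(a | inAct m a) pol x a = 1.

Notation Rint f := (Rintegral D setT f).

Definition pik (k : 'I_K) x := \sum_(a | inAct m a) pol x a * (k \in a)%:R.

Lemma pik_ge0 k x : 0 <= pik k x.
Proof. by apply: sumr_ge0 => a _; rewrite mulr_ge0. Qed.

Lemma pik_le1 k x : pik k x <= 1.
Proof.
rewrite -(Hp1 x); apply: ler_sum => a _.
by rewrite -{2}[pol x a]mulr1 ler_wpM2l //; case: (k \in a); rewrite ?ler01.
Qed.

Lemma meas_pik k : measurable_fun setT (pik k).
Proof. by apply: measS => a; apply: measM => //; exact: measC. Qed.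

Lemma norm_coord (x : d.-tuple R) i : norm2 (colv x) <= 1 -> `|tnth x i| <= 1.
Proof.
move=> h.
have N1 : dotv (colv x) (colv x) <= 1.
  have N0 := dotv_ge0 (colv x).
  rewrite -(sqr_sqrtr N0) -/(norm2 _).
  have := sqrtr_ge0 (dotv (colv x) (colv x)); rewrite -/(norm2 _) => s0.
  by rewrite -(expr1n _ 2) ler_pXn2r // ?nnegrE.
have := le_trans (coord_le (colv x) i) N1; rewrite mxE.
by rewrite -real_normK ?num_real // expr_le1.
Qed.

Definition hij k (i j : 'I_d) x := pik k x * (tnth x i * tnth x j).

Lemma meas_hij k i j : measurable_fun setT (hij k i j).
Proof. by apply: measM; [exact: meas_pik | apply: measM; exact: meas_tnth]. Qed.

Lemma int_hij k i j : Dint D (hij k i j).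
Proof.
apply: (@int_aebd _ _ _ _ 1); first exact: meas_hij.
apply: filterS HDnorm => x hx.
rewrite /hij !normrM; rewrite -[1]mul1r; apply: ler_pM => //.
  by rewrite ger0_norm ?pik_ge0 ?pik_le1.
rewrite -[1]mul1r; apply: ler_pM => //; exact: norm_coord.
Qed.

Lemma SigmaTK_E k i j : SigmaTK m D pol k i j = Rint (hij k i j).
Proof.
rewrite /SigmaTK mxE /Epol; apply: eq_Rintegral => x _.
rewrite /hij /pik mulr_suml; apply: eq_bigr => a _; by rewrite mulrA.
Qed.

Lemma quad_expand k u w x :
  pik k x * (dotv u (colv x) * dotv (colv x) w) =
  \sum_i \sum_j (u i 0 * w j 0) * hij k i j x.
Proof.
rewrite /dotv mulr_suml mulr_sumr; apply: eq_bigr => i _.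
rewrite mulr_sumr mulr_sumr; apply: eq_bigr => j _.
by rewrite /hij !mxE; ring.
Qed.

Lemma int_quad k u w : Dint D (fun x => pik k x * (dotv u (colv x) * dotv (colv x) w)).
Proof.
under [fun x => _]funext do rewrite quad_expand.
apply: int_sum => i; apply: int_sum => j; apply: intZ; exact: int_hij.
Qed.

Lemma quad_int k u w :
  Rint (fun x => pik k x * (dotv u (colv x) * dotv (colv x) w)) =
  dotv u (SigmaTK m D pol k *m w).
Proof.
under [fun x => _]funext do rewrite quad_expand.
rewrite Rint_sum; last first.
  by move=> i; apply: int_sum => j; apply: intZ; exact: int_hij.
rewrite /dotv; apply: eq_bigr => i _.
rewrite Rint_sum; last by move=> j; apply: intZ; exact: int_hij.
rewrite mxE mulr_sumr; apply: eq_bigr => j _.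
by rewrite RintZ ?int_hij // -SigmaTK_E; ring.
Qed.

Lemma Epol_core (I : Type) (r : seq I) (c e : I -> R) (kk : I -> 'I_K)
    (u w : I -> 'cV[R]_d) :
  Epol m D pol (fun x a => \sum_(q <- r) (c q + (kk q \in a)%:R * e q *
       (dotv (u q) (colv x) * dotv (colv x) (w q))))
  = \sum_(q <- r) (c q + e q * dotv (u q) (SigmaTK m D pol (kk q) *m w q)).
Proof.
rewrite /Epol.
have -> : (fun x => \sum_(a | inAct m a) pol x a * \sum_(q <- r) (c q + (kk q \in a)%:R * e q *
       (dotv (u q) (colv x) * dotv (colv x) (w q)))) =
  (fun x => \sum_(q <- r) (c q + e q * (pik (kk q) x * (dotv (u q) (colv x) * dotv (colv x) (w q))))).
  apply/funext => x.
  under eq_bigr do rewrite mulr_sumr.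
  rewrite exchange_big /=; apply: eq_bigr => q _.
  under eq_bigr do rewrite mulrDr.
  rewrite big_split /= -mulr_suml Hp1 mul1r; congr (_ + _).
  by rewrite /pik mulr_suml mulr_sumr; apply: eq_bigr => a _; ring.
rewrite (@Rint_sum _ _ D _ r (fun q x => c q + e q * (pik (kk q) x * (dotv (u q) (colv x) * dotv (colv x) (w q))))); last first.
  by move=> q; apply: intD; [exact: int_cst | apply: intZ; exact: int_quad].
apply: eq_bigr => q _.
rewrite RintD ?Rint_cst ?RintZ ?quad_int //; [exact: int_quad|exact: int_cst|].
apply: intZ; exact: int_quad.
Qed.

End Core.


Section EiterSec.
Variable R : realType.
Variable d : nat.
Variable D : probability (d.-tuple R) R.
Hypothesis HDnorm : {ae D, forall x : d.-tuple R, norm2 (colv x) <= 1}.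
Variables K m : nat.
Variable pol : d.-tuple R -> {set 'I_K} -> R.
Hypothesis Hpm : forall a, measurable_fun setT (fun x => pol x a).
Hypothesis Hp0 : forall x a, 0 <= pol x a.
Hypothesis Hp1 : forall x, \sum_(a | inAct m a) pol x a = 1.

Definition Sg (k : 'I_K) := SigmaTK m D pol k.
Definition Bm (k : 'I_K) : 'M[R]_d := 1%:M - 2^-1 *: Sg k.

Definition Qt := (('I_K * nat) * ('cV[R]_d * 'cV[R]_d))%type.

Definition term (q : Qt) (l : seq (d.-tuple R * {set 'I_K})) : R :=
  dotv q.2.1 (Cprod (take q.1.2 l) q.1.1 *m q.2.2).

Definition Ev (n : nat) (q : Qt) : R :=
  dotv q.2.1 (mpow (Bm q.1.1) (minn q.1.2 n) *m q.2.2).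

Definition upd (x : d.-tuple R) (a : {set 'I_K}) (q : Qt) : Qt :=
  ((q.1.1, q.1.2.-1),
   (q.2.1 - ((0 < q.1.2)%N%:R * ((q.1.1 \in a)%:R / 2) * dotv (colv x) q.2.1) *: colv x,
    q.2.2)).

Lemma outer_mul (v y : 'cV[R]_d) : v *m v^T *m y = dotv v y *: v.
Proof.
apply/matrixP => i j; rewrite !mxE /dotv mulr_suml; apply: eq_bigr => k _.
by rewrite !mxE big_ord1 !mxE [j]ord1; ring.
Qed.

Lemma term_cons x a q l : term q ((x, a) :: l) = term (upd x a q) l.
Proof.
case: q => [[k [|j]] [u w]]; rewrite /term /upd /=.
  by rewrite take0 /= !mul0r scale0r subr0.
rewrite !mulmxBl !mul1mx -!scalemxAl -(mulmxA (colv x *m _)) outer_mul.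
rewrite dotvBr dotvZr dotvZr dotvBl dotvZl.
set y := Cprod (take j l) k *m w.
rewrite [dotv u (colv x)]dotvC; ring.
Qed.

Lemma Eiter_lin n (r : seq Qt) :
  Eiter m D pol n (fun l => \sum_(q <- r) term q l) = \sum_(q <- r) Ev n q.
Proof.
elim: n r => [|n IH] r.
  rewrite /=; apply: eq_bigr => -[[k j] [u w]] _.
  by rewrite /term /Ev /=.
rewrite /=.
have -> : (fun x a => Eiter m D pol n (fun l => \sum_(q <- r) term q ((x, a) :: l))) =
  (fun x a => \sum_(q <- r) (dotv q.2.1 (mpow (Bm q.1.1) (minn q.1.2.-1 n) *m q.2.2)
     + (q.1.1 \in a)%:R * (- ((0 < q.1.2)%N%:R / 2)) *
       (dotv q.2.1 (colv x) * dotv (colv x) (mpow (Bm q.1.1) (minn q.1.2.-1 n) *m q.2.2)))).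
  apply/funext => x; apply/funext => a.
  have -> : (fun l => \sum_(q <- r) term q ((x, a) :: l)) =
            (fun l => \sum_(q <- map (upd x a) r) term q l).
    by apply/funext => l; rewrite big_map; apply: eq_bigr => q _; rewrite term_cons.
  rewrite IH big_map; apply: eq_bigr => -[[k j] [u w]] _.
  rewrite /Ev /upd /= dotvBl dotvZl.
  rewrite [dotv (colv x) u]dotvC; ring.
rewrite (Epol_core HDnorm Hpm Hp0 Hp1); apply: eq_bigr => -[[k j] [u w]] _ /=.
rewrite /Ev /=; case: j => [|j] /=.
  by rewrite !min0n mul0r oppr0 mul0r addr0.
rewrite minnSS mpowS -/(Sg k) /Bm -mulmxA mulmxBl mul1mx -scalemxAl dotvBr dotvZr.
ring.
Qed.

End EiterSec.


Section SigFacts.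
Variable R : realType.
Variable d : nat.
Variable D : probability (d.-tuple R) R.
Hypothesis HDnorm : {ae D, forall x : d.-tuple R, norm2 (colv x) <= 1}.
Variables K m : nat.
Hypothesis Hm1 : (1 <= m)%N.

Notation Rint f := (Rintegral D setT f).

Lemma Sigma_sym (pol : d.-tuple R -> {set 'I_K} -> R) k :
  (SigmaTK m D pol k)^T = SigmaTK m D pol k.
Proof.
apply/matrixP => i j; rewrite !mxE; congr Rintegral; apply/funext => x.
by apply: eq_bigr => a _; rewrite mulrC [tnth x j * _]mulrC mulrC.
Qed.

Lemma SigmaD_sym : (SigmaD D)^T = SigmaD D.
Proof.
apply/matrixP => i j; rewrite !mxE; congr Rintegral; apply/funext => x.
by rewrite mulrC.
Qed.

Lemma meas_dotv (u : 'cV[R]_d) : measurable_fun setT (fun x : d.-tuple R => dotv u (colv x)).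
Proof.
have -> : (fun x : d.-tuple R => dotv u (colv x)) = (fun x => \sum_(i <- index_enum 'I_d) (u i 0 * tnth x i)).
  by apply/funext => x; rewrite /dotv; apply: eq_bigr => i _; rewrite mxE.
apply: measS => i; apply: measM; [exact: measC | exact: meas_tnth].
Qed.

Lemma meas_dotv' (u : 'cV[R]_d) : measurable_fun setT (fun x : d.-tuple R => dotv (colv x) u).
Proof.
have -> : (fun x : d.-tuple R => dotv (colv x) u) = (fun x => dotv u (colv x)).
  by apply/funext => x; rewrite dotvC.
exact: meas_dotv.
Qed.

Definition pol1 (k : 'I_K) (x : d.-tuple R) (a : {set 'I_K}) : R := (a == [set k]%SET)%:R.

Lemma pol1_sum k x (F : {set 'I_K} -> R) :
  \sum_(a | inAct m a) pol1 k x a * F a = F [set k]%SET.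
Proof.
rewrite (bigD1 [set k]%SET) /=; last by rewrite /inAct cards1.
rewrite /pol1 eqxx mul1r big1 ?addr0 // => a /andP[_ ha].
by rewrite (negbTE ha) mul0r.
Qed.

Lemma SigmaD_E k : SigmaD D = SigmaTK m D (pol1 k) k.
Proof.
apply/matrixP => i j; rewrite !mxE /Epol; apply: eq_Rintegral => x _.
by rewrite pol1_sum set11 mul1r.
Qed.

Section WithPol.
Variable pol : d.-tuple R -> {set 'I_K} -> R.
Hypothesis Hpm : forall a, measurable_fun setT (fun x => pol x a).
Hypothesis Hp0 : forall x a, 0 <= pol x a.
Hypothesis Hp1 : forall x, \sum_(a | inAct m a) pol x a = 1.

Lemma pol1_hyps k :
  [/\ forall a, measurable_fun setT (fun x => pol1 k x a),
      forall x a, 0 <= pol1 k x a &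
      forall x, \sum_(a | inAct m a) pol1 k x a = 1].
Proof.
split.
- by move=> a; exact: measC.
- by move=> x a; rewrite /pol1 ler0n.
- move=> x; have := pol1_sum k x (fun _ => 1).
  by under eq_bigr do rewrite mulr1.
Qed.

Lemma cs1 (u v : 'cV[R]_d) : dotv u v ^+ 2 <= dotv u u * dotv v v.
Proof.
have := psd_cs u v (trmx1 _ _) (fun w => ltac:(rewrite /qf mul1mx; exact: dotv_ge0)).
by rewrite /qf !mul1mx.
Qed.

Lemma qfS_E k v : qf (SigmaTK m D pol k) v =
  Rint (fun x => pik m pol k x * (dotv v (colv x) * dotv (colv x) v)).
Proof. by rewrite (quad_int HDnorm Hpm Hp0 Hp1). Qed.

Lemma qfS_ge0 k v : 0 <= qf (SigmaTK m D pol k) v.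
Proof.
rewrite qfS_E; apply: Rintegral_ge0 => x _.
rewrite mulr_ge0 ?pik_ge0 // [dotv (colv x) v]dotvC -expr2; exact: sqr_ge0.
Qed.

Lemma qfS_le k v : qf (SigmaTK m D pol k) v <= dotv v v.
Proof.
rewrite qfS_E -[X in _ <= X](Rint_cst D).
apply: Rint_ae_le.
- apply: measM; first exact: meas_pik.
  by apply: measM; [exact: meas_dotv | exact: meas_dotv'].
- exact: measC.
- exact: (int_quad HDnorm Hpm Hp0 Hp1).
- exact: int_cst.
apply: filterS HDnorm => x hx.
have N1 : dotv (colv x) (colv x) <= 1.
  have N0 := dotv_ge0 (colv x).
  rewrite -(sqr_sqrtr N0) -/(norm2 _).
  have := sqrtr_ge0 (dotv (colv x) (colv x)); rewrite -/(norm2 _) => s0.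
  by rewrite -(expr1n _ 2) ler_pXn2r // ?nnegrE.
have h1 := cs1 v (colv x).
rewrite [dotv (colv x) v]dotvC -expr2.
have g0 : 0 <= dotv v (colv x) ^+ 2 by exact: sqr_ge0.
have : dotv v (colv x) ^+ 2 <= dotv v v.
  apply: (le_trans h1); rewrite -[X in _ <= X]mulr1; apply: ler_wpM2l => //.
  exact: dotv_ge0.
move=> h2; apply: le_trans h2.
rewrite -[X in _ <= X]mul1r; apply: ler_wpM2r => //; exact: pik_le1.
Qed.

End WithPol.

Lemma qfS_lb (pol : d.-tuple R -> {set 'I_K} -> R)
  (Hpm : forall a, measurable_fun setT (fun x => pol x a))
  (Hp0 : forall x a, 0 <= pol x a)
  (Hp1 : forall x, \sum_(a | inAct m a) pol x a = 1) k (gl : R) v : (forall x, gl <= pol x [set k]%SET) -> 0 <= gl ->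
  gl * qf (SigmaD D) v <= qf (SigmaTK m D pol k) v.
Proof.
move=> hgl gl0.
have [h1m h10 h11] := pol1_hyps k.
have e : qf (SigmaD D) v = Rint (fun x => (dotv v (colv x) * dotv (colv x) v)).
  rewrite (SigmaD_E k) (qfS_E h1m h10 h11); apply: eq_Rintegral => x _.
  by rewrite /pik pol1_sum set11 mul1r.
have ig : Dint D (fun x => (dotv v (colv x) * dotv (colv x) v)).
  have := int_quad HDnorm h1m h10 h11 k v v.
  by apply: eq_integrable => // x _ /=; rewrite /pik pol1_sum set11 mul1r.
rewrite e (qfS_E Hpm Hp0 Hp1) -RintZ //; apply: le_Rintegral => //.
- exact: intZ.
- exact: (int_quad HDnorm Hpm Hp0 Hp1).
move=> x _; apply: ler_wpM2r.
  by rewrite [dotv (colv x) v]dotvC -expr2 sqr_ge0.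
apply: le_trans (hgl x) _.
rewrite /pik (bigD1 [set k]%SET) /=; last by rewrite /inAct cards1.
rewrite set11 mulr1 lerDl; apply: sumr_ge0 => a _; rewrite mulr_ge0 //.
Qed.

End SigFacts.


Section Bias.
Variable R : realType.
Variable d : nat.
Variable D : probability (d.-tuple R) R.
Hypothesis HDnorm : {ae D, forall x : d.-tuple R, norm2 (colv x) <= 1}.
Variables K m : nat.
Variable pol : d.-tuple R -> {set 'I_K} -> R.
Hypothesis Hpm : forall a, measurable_fun setT (fun x => pol x a).
Hypothesis Hp0 : forall x a, 0 <= pol x a.
Hypothesis Hp1 : forall x, \sum_(a | inAct m a) pol x a = 1.
Variable M : nat.
Variable theta : 'I_K -> 'cV[R]_d.
Variable x : 'cV[R]_d.
Variable A : {set 'I_K}.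

Definition Sk k := SigmaTK m D pol k.
Definition Bk k := Bm D m pol k.
Definition Pk k : 'M[R]_d := invmx (Sk k) - 2^-1 *: \sum_(0 <= n < M.+1) mpow (Bk k) n.

Definition fk (x0 : d.-tuple R) (a0 : {set 'I_K}) (k : 'I_K) : R :=
  linloss theta x0 k * (k \in a0)%:R * (k \in A)%:R.

Definition rlist (x0 : d.-tuple R) (a0 : {set 'I_K}) : seq (Qt R d K) :=
  flatten [seq ((k, 0%N), (x, fk x0 a0 k *: (invmx (Sk k) *m colv x0))) ::
              [seq ((k, n), (x, (- (fk x0 a0 k / 2)) *: colv x0)) | n <- iota 0 M.+1]
          | k <- index_enum 'I_K].

Lemma integrand_E x0 a0 l :
  \sum_k dotv x (thetaHat m D pol (linloss theta) k x0 a0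
                 - thetaTilde M (linloss theta) l k x0 a0) * (k \in A)%:R
  = \sum_(q <- rlist x0 a0) term q l.
Proof.
rewrite /rlist big_flatten big_map; apply: eq_bigr => k _.
rewrite big_cons big_map.
have -> : iota 0 M.+1 = 0%N :: iota 1 M by [].
rewrite big_cons.
under eq_bigr do rewrite /term /= -scalemxAr dotvZr.
rewrite /term /= take0 /= -!scalemxAr !dotvZr mul1mx -mulr_sumr.
rewrite /thetaHat /thetaTilde /SigPlus dotvBr !dotvZr -scalemxAl dotvZr.
rewrite mulmxDl mul1mx dotvDr mulmx_suml dotv_sumr /index_iota subSS subn0.
rewrite /fk /Sk; ring.
Qed.

Lemma Ev_rlist x0 a0 :
  \sum_(q <- rlist x0 a0) Ev D m pol M q = \sum_k fk x0 a0 k * dotv x (Pk k *m colv x0).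
Proof.
rewrite /rlist big_flatten big_map; apply: eq_bigr => k _.
rewrite big_cons big_map {1}/Ev /= min0n /mpow /= mul1mx dotvZr.
rewrite big_seq.
under eq_bigr => n hn.
  have hn' : n \in iota 0 M.+1 := hn.
  rewrite /Ev /= (minn_idPl _); last by move: hn'; rewrite mem_iota add0n ltnS => /andP[].
  rewrite -scalemxAr dotvZr.
  over.
rewrite -(big_seq _ _ (0%N :: iota 1 M) (fun n => - (fk x0 a0 k / 2) * dotv x (mpow (Bm D m pol k) n *m colv x0))).
rewrite -mulr_sumr /Pk mulmxBl dotvBr -scalemxAl dotvZr mulmx_suml dotv_sumr.
rewrite /index_iota subn0 /Sk /Bk; ring.
Qed.

Lemma bias_formula :
  Epol m D pol (fun x0 a0 => Eiter m D pol M (fun l =>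
     \sum_k dotv x (thetaHat m D pol (linloss theta) k x0 a0
                   - thetaTilde M (linloss theta) l k x0 a0) * (k \in A)%:R))
  = \sum_k (k \in A)%:R * dotv x (Pk k *m Sk k *m theta k).
Proof.
have -> : (fun x0 a0 => Eiter m D pol M (fun l =>
     \sum_k dotv x (thetaHat m D pol (linloss theta) k x0 a0
                   - thetaTilde M (linloss theta) l k x0 a0) * (k \in A)%:R)) =
  (fun x0 a0 => \sum_(q <- index_enum 'I_K) (0 + (id q \in a0)%:R * (q \in A)%:R *
       (dotv ((Pk q)^T *m x) (colv x0) * dotv (colv x0) (theta q)))).
  apply/funext => x0; apply/funext => a0.
  have -> : (fun l => \sum_k dotv x (thetaHat m D pol (linloss theta) k x0 a0
                   - thetaTilde M (linloss theta) l k x0 a0) * (k \in A)%:R) =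
            (fun l => \sum_(q <- rlist x0 a0) term q l).
    by apply/funext => l; exact: integrand_E.
  rewrite Eiter_lin // Ev_rlist; apply: eq_bigr => k _.
  by rewrite /fk /linloss -dotv_mulmx; ring.
rewrite (Epol_core HDnorm Hpm Hp0 Hp1); apply: eq_bigr => k _.
by rewrite add0r -dotv_mulmx mulmxA.
Qed.

End Bias.


Section MatFacts.
Variable R : realType.
Variable d : nat.
Implicit Types (B S : 'M[R]_d).

Lemma tele B N : \sum_(0 <= n < N) (mpow B n *m (1%:M - B)) = 1%:M - mpow B N.
Proof.
elim: N => [|N IH]; first by rewrite big_geq // /mpow /= subrr.
rewrite big_nat_recr //= IH mulmxBr mulmx1 -mpowSr.
by rewrite addrA subrK.
Qed.

Lemma dotv_eq0 (u : 'cV[R]_d) : dotv u u = 0 -> u = 0.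
Proof.
move=> h; apply/matrixP => i j; rewrite [j]ord1 mxE.
have : u i 0 ^+ 2 = 0.
  apply/eqP; rewrite eq_le sqr_ge0 andbT -h.
  exact: coord_le.
by move/eqP; rewrite sqrf_eq0 => /eqP.
Qed.

End MatFacts.

Section PerK.
Variable R : realType.
Variable d : nat.
Hypothesis Hd : (0 < d)%N.
Variable D : probability (d.-tuple R) R.
Hypothesis HDnorm : {ae D, forall x : d.-tuple R, norm2 (colv x) <= 1}.
Variables K m : nat.
Hypothesis Hm1 : (1 <= m)%N.
Variable pol : d.-tuple R -> {set 'I_K} -> R.
Hypothesis Hpm : forall a, measurable_fun setT (fun x => pol x a).
Hypothesis Hp0 : forall x a, 0 <= pol x a.
Hypothesis Hp1 : forall x, \sum_(a | inAct m a) pol x a = 1.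
Hypothesis HSig : posdef (SigmaD D).
Variable lam : R.
Hypothesis Hlam : is_lambda_min (SigmaD D) lam.
Variable gl : R.
Hypothesis Hgl0 : 0 <= gl.
Hypothesis Hgl : forall x k, gl <= pol x [set k]%SET.
Variable M : nat.
Variable theta : 'I_K -> 'cV[R]_d.
Variable x : 'cV[R]_d.
Variable A : {set 'I_K}.

Let S k := Sk D m pol k.
Let B k := Bk D m pol k.
Let mu := gl * lam.
Let rho := 1 - mu / 2.

Lemma S_sym k : (S k)^T = S k.
Proof. exact: Sigma_sym. Qed.

Lemma B_sym k : (B k)^T = B k.
Proof.
by rewrite /B /Bk /Bm linearB /= linearZ /= trmx1 -/(Sg D m pol k) /Sg Sigma_sym.
Qed.

Lemma qS_ge0 k v : 0 <= qf (S k) v.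
Proof. exact: (qfS_ge0 HDnorm Hpm Hp0 Hp1). Qed.

Lemma qS_le k v : qf (S k) v <= dotv v v.
Proof. exact: (qfS_le HDnorm Hpm Hp0 Hp1). Qed.

Lemma qS_lb k v : mu * dotv v v <= qf (S k) v.
Proof.
apply: le_trans _ (qfS_lb HDnorm Hm1 Hpm Hp0 Hp1 v (Hgl^~ k) Hgl0).
rewrite /mu -mulrA ler_wpM2l //; exact: rayleigh.
Qed.

Lemma lam_gt0 : 0 < lam.
Proof. exact: (eig_pos HSig Hlam.1). Qed.

Lemma mu_ge0 : 0 <= mu.
Proof. by rewrite /mu mulr_ge0 // ltW // lam_gt0. Qed.

Lemma mu_le1 (k : 'I_K) : mu <= 1.
Proof.
have [u hu] := unit_vec R Hd.
have := le_trans (qS_lb k u) (qS_le k u).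
by rewrite hu mulr1.
Qed.

Lemma qB_E k v : qf (B k) v = dotv v v - 2^-1 * qf (S k) v.
Proof.
by rewrite /qf /B /Bk /Bm mulmxBl mul1mx -scalemxAl dotvBr dotvZr.
Qed.

Lemma qB_ge0 k v : 0 <= qf (B k) v.
Proof.
rewrite qB_E; have := qS_le k v; have := qS_ge0 k v; have := dotv_ge0 v.
set a := dotv v v; set b := qf (S k) v; lra.
Qed.

Lemma qB_le k v : qf (B k) v <= rho * dotv v v.
Proof.
rewrite qB_E /rho; have := qS_lb k v.
set a := dotv v v; set b := qf (S k) v => h.
have : 2^-1 * (mu * a) <= 2^-1 * b by rewrite ler_wpM2l // invr_ge0 ler0n.
move=> h2; rewrite mulrBl mul1r.
have -> : mu / 2 * a = 2^-1 * (mu * a) by ring.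
lra.
Qed.

Lemma rho_ge0 (k : 'I_K) : 0 <= rho.
Proof. by rewrite /rho; have := mu_le1 k; lra. Qed.

Lemma rho_le1 : rho <= 1.
Proof. by rewrite /rho; have := mu_ge0; lra. Qed.

Lemma PS_eq k : Pk D m pol M k *m S k = invmx (S k) *m S k - (1%:M - mpow (B k) M.+1).
Proof.
have hS : S k = 2 *: (1%:M - B k).
  by rewrite /B /Bk /Bm -/(Sg D m pol k) /Sg opprB addrC subrK scalerA mulfV ?pnatr_eq0 // scale1r.
rewrite /Pk -/(S k) -/(B k) mulmxBl -scalemxAl.
congr (_ - _).
rewrite mulmx_suml hS.
under eq_bigr do rewrite -scalemxAr.
rewrite -scaler_sumr scalerA mulVf ?pnatr_eq0 // scale1r.
exact: tele.
Qed.

Lemma perk k : dotv x x <= 1 -> dotv (theta k) (theta k) <= 1 ->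
  `|dotv x (Pk D m pol M k *m S k *m theta k)| <=
     (if S k \in unitmx then rho ^+ M.+1 else 1).
Proof.
move=> hx ht; rewrite PS_eq.
have hB := qf_pow (B_sym k) (rho_ge0 k) (qB_ge0 k) (qB_le k).
have rn1 : rho ^+ M.+1 <= 1 by rewrite exprn_ile1 // ?rho_ge0 ?rho_le1.
case: ifP => hu.
  rewrite mulVmx // opprB addrC subrK.
  apply: polar => //.
  - exact: mpow_sym (B_sym k).
  - by rewrite exprn_ge0 // (rho_ge0 k).
  move=> v; have /andP[h1 h2] := hB M.+1 v.
  by rewrite ger0_norm.
rewrite invmx_out; last by rewrite inE hu.
apply: polar => //.
- by rewrite linearB /= linearB /= trmx_mul S_sym trmx1 -mpowS mpow_sym //; exact: B_sym.
move=> v.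
have -> : qf (S k *m S k - (1%:M - mpow (B k) M.+1)) v =
   dotv (S k *m v) (S k *m v) - dotv v v + qf (mpow (B k) M.+1) v.
  rewrite /qf !mulmxBl mul1mx !dotvBr -mulmxA [dotv v (S k *m _)]dotv_sym ?S_sym //.
  ring.
have hc := qcontract v (S_sym k) ler01 (qS_ge0 k) (fun u => ltac:(rewrite mul1r; exact: qS_le k u)).
rewrite expr1n mul1r in hc.
have /andP[h1 h2] := hB M.+1 v.
have h3 : rho ^+ M.+1 * dotv v v <= dotv v v.
  by rewrite ler_piMl // dotv_ge0.
have h4 := dotv_ge0 (S k *m v).
rewrite mul1r ler_norml; apply/andP; split; lra.
Qed.

Lemma S_unit k : 0 < mu -> S k \in unitmx.
Proof.
move=> hmu; apply/negPn/negP => hn.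
have hP : posdef (S k).
  split; first exact: S_sym.
  move=> v vn0; rewrite qf_posdef.
  have Np : 0 < dotv v v.
    rewrite lt_def dotv_ge0 andbT; apply/negP => /eqP h.
    by move/negP: vn0; apply; apply/eqP; exact: dotv_eq0.
  apply: lt_le_trans (qS_lb k v); exact: mulr_gt0.
have eig : eigenvalue (S k) 0.
  rewrite /eigenvalue /eigenspace.
  rewrite (_ : (0:R)%:M = 0); last by apply/matrixP => i j; rewrite !mxE mul0rn.
  by rewrite subr0 kermx_eq0 row_free_unit.
by have := eig_pos hP eig; rewrite ltxx.
Qed.

End PerK.


Lemma norm2_le1 {R : realType} {d} {v : 'cV[R]_d} : norm2 v <= 1 -> dotv v v <= 1.
Proof.
move=> h; have N0 := dotv_ge0 v.
rewrite -(sqr_sqrtr N0) -/(norm2 _).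
have := sqrtr_ge0 (dotv v v); rewrite -/(norm2 _) => s0.
by rewrite -(expr1n _ 2) ler_pXn2r // ?nnegrE.
Qed.

Lemma count_singletons (K m : nat) (R : realType) : (1 <= m)%N ->
  \sum_(a : {set 'I_K} | inAct m a) ((#|a| == 1%N)%:R : R) = K%:R.
Proof.
move=> hm.
have -> : \sum_(a : {set 'I_K} | inAct m a) ((#|a| == 1%N)%:R : R) =
          \sum_(a in [set a : {set 'I_K} | #|a| == 1%N]%SET) 1.
  rewrite big_mkcond [RHS]big_mkcond; apply: eq_bigr => a _.
  rewrite inE /inAct; case: eqP => [->|_] /=; first by rewrite hm.
  by case: (#|a| <= m)%N.
by rewrite sumr_const card_draws card_ord bin1.
Qed.

Unset Implicit Arguments.
Set Strict Implicit.
Theorem lemma2 (R : realType) (K m d T : nat)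
  (HK : (2 <= K)%N) (Hm1 : (1 <= m)%N) (HmK : (m < K)%N)
  (Hd : (1 <= d)%N) (HT : (3 <= T)%N)
  (* context distribution *)
  (D : probability (d.-tuple R) R)
  (HDnorm : {ae D, forall x : d.-tuple R, norm2 (colv x) <= 1})
  (HSig : posdef (SigmaD D))
  (lam : R) (Hlam : is_lambda_min (SigmaD D) lam)
  (Hc1 : 1 <= c1 K m d T lam)
  (* round t and the history up to round t-1 *)
  (t : nat) (Ht1 : (1 <= t)%N) (HtT : (t <= T)%N)
  (tht : nat -> 'I_K -> 'cV[R]_d)   (* tilde theta_{s,k}, s < t *)
  (Hs : nat -> R) (HHs : forall s, 0 <= Hs s)   (* H(Abar_s(X_s)), s < t *)
  (* FTRL point Abar_t and a distribution p_t(.|x) with mean Abar_t(x) *)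
  (Abar : d.-tuple R -> 'I_K -> R)
  (HAbar : forall x, in_convA m (Abar x) /\
     forall a, in_convA m a ->
       ftrl_obj tht t (etaT K m d T lam Hs t) (colv x) (Abar x)
       <= ftrl_obj tht t (etaT K m d T lam Hs t) (colv x) a)
  (p : d.-tuple R -> {set 'I_K} -> R)
  (Hpmeas : forall a, measurable_fun setT (fun x => p x a))
  (Hp0 : forall x a, 0 <= p x a)
  (HpA : forall x a, ~~ inAct m a -> p x a = 0)
  (Hp1 : forall x, \sum_(a | inAct m a) p x a = 1)
  (Hpmean : forall x k, \sum_(a | inAct m a) p x a * (k \in a)%:R = Abar x k)
  (* round-t environment vectors; losses l_t(x,k) = <x, theta_{t,k}> *)
  (theta : 'I_K -> 'cV[R]_d) (Htheta : forall k, norm2 (theta k) <= 1)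
  (* the evaluation point *)
  (x : 'cV[R]_d) (Hx : norm2 x <= 1) :
  let pol := mixpol (gammaT K m d T lam Hs t) p in
  let M := Msamp K m d T lam Hs t in
  let loss := linloss theta in
  forall A : {set 'I_K}, inAct m A ->
    Epol m D pol (fun x0 a0 =>
      Eiter m D pol M (fun l =>
        \sum_k dotv x (thetaHat m D pol loss k x0 a0
                       - thetaTilde M loss l k x0 a0) * (k \in A)%:R))
    <= m%:R / (t%:R ^+ 2).
Proof.
move=> pol M loss A HA.
have hlam : 0 < lam := eig_pos HSig Hlam.1.
have hK : (0 < K)%N by apply: leq_trans HK.
have hKr : 0 < K%:R :> R by rewrite ltr0n.
have hT1 : 1 < T%:R :> R by rewrite ltr1n; apply: leq_trans HT.
have hlnT : 0 < ln (T%:R : R) by exact: ln_gt0.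
have ht1 : 1 <= t%:R :> R by rewrite ler1n.
have htpos : (t%:R : R) \is Num.pos by rewrite posrE; apply: lt_le_trans ht1.
have hlnt : 0 <= ln (t%:R : R) by exact: ln_ge0.
have hlntT : ln (t%:R : R) <= ln (T%:R : R).
  rewrite ler_ln // ?ler_nat // posrE; apply: lt_trans hT1; exact: ltr01.
set beta := betaT K m d T lam Hs t.
have hbeta2 : 2 <= beta by rewrite /beta /betaT le_max lexx.
have hbetac : c2 K lam * ln T%:R <= beta.
  by rewrite /beta /betaT le_max; apply/orP; right; rewrite le_max lexx.
have hbeta0 : 0 < beta by apply: lt_le_trans hbeta2.
have heta : etaT K m d T lam Hs t = beta^-1 by [].
set gam := gammaT K m d T lam Hs t.
have hgam : gam = 4 * K%:R * ln t%:R / lam * beta^-1 by rewrite /gam /gammaT /alphaT heta.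
have hgam0 : 0 <= gam.
  rewrite hgam; apply: mulr_ge0; last by rewrite invr_ge0 ltW.
  by apply: mulr_ge0; [apply: mulr_ge0 => //; apply: mulr_ge0 | rewrite invr_ge0 ltW].
have hgam1 : gam <= 1.
  have h1 : gam * beta = 4 * K%:R * ln t%:R / lam.
    by rewrite hgam -mulrA mulVf ?mulr1 // gt_eqF.
  have h2 : 4 * K%:R * ln t%:R / lam <= 4 * K%:R * ln T%:R / lam.
    apply: ler_wpM2r; first by rewrite invr_ge0 ltW.
    by apply: ler_wpM2l => //; apply: mulr_ge0.
  have h3 : 2 * (4 * K%:R * ln T%:R / lam) <= beta.
    apply: le_trans hbetac; rewrite /c2 le_eqVlt; apply/orP; left; apply/eqP.
    by field; rewrite gt_eqF.
  have h4 : gam * beta <= beta.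
    rewrite h1; apply: (le_trans h2); apply: le_trans h3.
    have : 0 <= 4 * K%:R * ln T%:R / lam.
      apply: divr_ge0; last exact: ltW.
      by apply: mulr_ge0; [apply: mulr_ge0 | exact: ltW].
    lra.
  by rewrite -ler_pdivlMr // divff ?gt_eqF // in h4.
have Hpm : forall a, measurable_fun setT (fun x => pol x a).
  move=> a; rewrite /pol /mixpol.
  apply: measD; first by apply: measM; [exact: measC | exact: Hpmeas].
  exact: measC.
have Hp0' : forall x a, 0 <= pol x a.
  move=> x0 a; rewrite /pol /mixpol; apply: addr_ge0.
    by apply: mulr_ge0; [rewrite subr_ge0 | exact: Hp0].
  by apply: mulr_ge0 => //; apply: divr_ge0 => //; exact: ltW.
have Hp1' : forall x, \sum_(a | inAct m a) pol x a = 1.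
  move=> x0; rewrite /pol /mixpol big_split /= -mulr_sumr Hp1 mulr1.
  rewrite -mulr_sumr -mulr_suml count_singletons // divff ?gt_eqF // mulr1.
  by rewrite subrK.
set gl := gam / K%:R.
have Hgl0 : 0 <= gl by apply: divr_ge0 => //; exact: ltW.
have Hgl : forall x k, gl <= pol x [set k]%SET.
  move=> x0 k; rewrite /pol /mixpol cards1 eqxx /= mul1r.
  rewrite lerDr; apply: mulr_ge0; [rewrite subr_ge0 | exact: Hp0].
  done.
rewrite /loss (bias_formula HDnorm Hpm Hp0' Hp1').
have hglam : gl * lam / 2 = 2 * ln (t%:R : R) / beta.
  by rewrite /gl hgam; field; rewrite !gt_eqF.
have hMb : beta <= M%:R.
  rewrite /M /Msamp heta invrK natr_absz ger0_norm; first exact: ceil_ge.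
  by rewrite ceil_ge0; apply: lt_le_trans hbeta2; rewrite (lt_trans (ltrN10 _)) ?ltr0n.
have hRB : forall rho : R, 0 <= rho -> rho = 1 - gl * lam / 2 ->
    rho ^+ M.+1 <= (t%:R ^+ 2)^-1.
  move=> rho r0 hr; rewrite hr hglam in r0 *.
  set c := 2 * ln (t%:R : R) / beta.
  have h1 : 1 - c <= expR (- c) by rewrite -[1 - c]/(1 + - c) expR_ge1Dx.
  apply: (le_trans (y := expR (- c) ^+ M.+1)).
    by rewrite ler_pXn2r // nnegrE expR_ge0.
  rewrite -expRM_natl.
  have -> : (t%:R ^+ 2 : R)^-1 = expR (- (2%:R * ln (t%:R : R))).
    by rewrite expRN expRM_natl lnK.
  rewrite ler_expR mulrN lerN2.
  have hb : 1 <= M.+1%:R / beta.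
    rewrite ler_pdivlMr // mul1r; apply: (le_trans hMb); rewrite ler_nat.
    exact: leqnSn.
  have -> : M.+1%:R * c = (2%:R * ln (t%:R : R)) * (M.+1%:R / beta) by rewrite /c; ring.
  rewrite -[X in X <= _]mulr1 ler_wpM2l //.
  by apply: mulr_ge0.
have hz : forall k, `|dotv x (Pk D m pol M k *m Sk D m pol k *m theta k)| <= (t%:R ^+ 2)^-1.
  move=> k.
  have hp := perk Hd HDnorm Hm1 Hpm Hp0' Hp1' HSig Hlam Hgl0 Hgl M (norm2_le1 Hx) (norm2_le1 (Htheta k)).
  have r0 := rho_ge0 Hd HDnorm Hm1 Hpm Hp0' Hp1' HSig Hlam Hgl0 Hgl k.
  have hrb := hRB _ r0 erefl.
  move: hp; case: ifP => hu hp; first exact: le_trans hp hrb.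
  have t1 : t = 1%N.
    apply/eqP; rewrite eqn_leq Ht1 andbT leqNgt; apply/negP => t2.
    have hlnt' : 0 < ln (t%:R : R) by apply: ln_gt0; rewrite ltr1n.
    have hgp : 0 < gam.
      rewrite hgam; apply: mulr_gt0; last by rewrite invr_gt0.
      apply: mulr_gt0; last by rewrite invr_gt0.
      by apply: mulr_gt0 => //; apply: mulr_gt0.
    have : 0 < gl * lam by apply: mulr_gt0 => //; apply: divr_gt0.
    move/(S_unit Hd HDnorm Hm1 Hpm Hp0' Hp1' HSig Hlam Hgl0 Hgl k).
    by rewrite /Sk hu.
  by move: hp; rewrite t1 expr1n invr1.
apply: (le_trans (y := \sum_k (k \in A)%:R * (t%:R ^+ 2)^-1)).
  apply: ler_sum => k _; case: (k \in A) => /=; last by rewrite !mul0r.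
  by rewrite !mul1r; exact: le_trans (ler_norm _) (hz k).
rewrite -mulr_suml.
have -> : \sum_k ((k \in A)%:R : R) = \sum_(k in A) (1:R).
  by rewrite [RHS]big_mkcond; apply: eq_bigr => k _; case: (k \in A).
rewrite sumr_const; apply: ler_wpM2r; first by rewrite invr_ge0 exprn_ge0.
by rewrite ler_nat.
Qed.
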